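(* The series $\mathfrak{f}_2(z)=\sum_{n\ge0}\frac{-1}{2n-1}\binom{2n}{n}^2z^n$ belongs to $\mathcal{L}^2(\mathcal{P}\setminus\{2\})$, where $\mathcal{P}$ is the set of all primes.
   Context: For a prime $p$, $\mathbb{Z}_{(p)}$ is the localization of $\mathbb{Z}$ at $(p)$; for $f=\sum a(n)z^n\in\mathbb{Z}_{(p)}[[z]]$, $f_{|p}(z)=\sum (a(n)\bmod p)z^n$. The height of a rational function $P/Q$ with $P,Q$ coprime polynomials is $\max(\deg P,\deg Q)$. For an infinite set $\mathcal{S}$ of primes, $\mathcal{L}^2(\mathcal{S})$ is the set of $f\in 1+z\mathbb{Q}[[z]]$ such that there is a constant $C>0$ independent of $p$ with: for every $p\in\mathcal{S}$, $f\in\mathbb{Z}_{(p)}[[z]]$, and there exist an integer $l_p>0$ and $A_p\in\mathbb{F}_p(z)\cap\mathbb{F}_p[[z]]$ with $f_{|p}(z)=A_p(z)f_{|p}(z^{p^{l_p}})$ and height of $A_p$ at most $Cp^{2l_p}$. *)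

(* Defs.v *)
From HB Require Import structures.
From mathcomp Require Import all_boot all_order all_algebra.
Set Implicit Arguments. Unset Strict Implicit. Unset Printing Implicit Defensive.
Import Order.TTheory GRing.Theory Num.Theory.
Local Open Scope ring_scope.

(* Formal power series are represented by their coefficient sequences nat -> K. *)

Definition p_integral (p : nat) (q : rat) : bool := ~~ (p %| `|denq q|)%N.

Definition red_rat (p : nat) (q : rat) : 'F_p := (numq q)%:~R / (denq q)%:~R.

Definition fps_red (p : nat) (f : nat -> rat) : nat -> 'F_p := fun n => red_rat p (f n).

Definition fps_mulpoly (K : nzRingType) (P : {poly K}) (g : nat -> K) : nat -> K :=
  fun n => \sum_(i < n.+1) P`_i * g (n - i)%N.

Definition fps_subst_pow (K : nzRingType) (g : nat -> K) (q : nat) : nat -> K :=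
  fun n => if (q %| n)%N then g (n %/ q)%N else 0.

Definition rat_height (K : nzRingType) (P Q : {poly K}) : nat :=
  maxn (size P).-1 (size Q).-1.

(* A_p in F_p(z) ∩ F_p[[z]] is written P/Q with P, Q coprime and Q(0) != 0
   (which, for a reduced fraction, is exactly membership in F_p[[z]]);
   the identity f_{|p}(z) = A_p(z) f_{|p}(z^{p^l}) is written
   Q * f_{|p}(z) = P * f_{|p}(z^{p^l}) in F_p[[z]] (equivalent as Q is invertible
   in F_p[[z]]). *)
Definition in_L2 (S : pred nat) (f : nat -> rat) : Prop :=
  f 0%N = 1 /\
  exists C : rat, 0 < C /\
    forall p : nat, prime p -> S p ->
      (forall n, p_integral p (f n)) /\
      exists l : nat, (0 < l)%N /\
        exists P Q : {poly 'F_p},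
          [/\ coprimep P Q, Q.[0] != 0,
              (rat_height P Q)%:R <= C * (p ^ (2 * l))%:R
            & forall n, fps_mulpoly Q (fps_red p f) n
                        = fps_mulpoly P (fps_subst_pow (fps_red p f) (p ^ l)) n].

Definition frak_f2 (n : nat) : rat :=
  - ((('C(2 * n, n) ^ 2)%N)%:R / (((2 * n)%N)%:Z - 1)%:~R).

(* Main.v *)
Require Import Defs.
From HB Require Import structures.
From mathcomp Require Import all_boot all_order all_algebra.
From mathcomp Require Import zify ring.
Set Implicit Arguments. Unset Strict Implicit. Unset Printing Implicit Defensive.
Import Order.TTheory GRing.Theory Num.Theory.
Local Open Scope ring_scope.

Section Fps.
Variable K : comNzRingType.

Definition truncT (N : nat) (s : nat -> K) : {poly K} := \poly_(i < N) s i.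

Lemma mul_T (P : {poly K}) s n N : (n < N)%N -> fps_mulpoly P s n = (P * truncT N s)`_n.
Proof.
move=> hn; rewrite coefM /fps_mulpoly; apply: eq_bigr => i _.
by rewrite coef_poly; case: ifP => // /negbT; rewrite -leqNgt => h; exfalso; lia.
Qed.

Lemma coefM_eq (R S1 S2 : {poly K}) n :
  (forall i, (i <= n)%N -> S1`_i = S2`_i) -> (R * S1)`_n = (R * S2)`_n.
Proof.
move=> h; rewrite !coefM; apply: eq_bigr => i _; rewrite h //; lia.
Qed.

Lemma fps_assoc (P Q : {poly K}) s n :
  fps_mulpoly P (fps_mulpoly Q s) n = fps_mulpoly (P * Q) s n.
Proof.
rewrite (mul_T _ _ (ltnSn n)) (mul_T _ _ (ltnSn n)) -mulrA.
apply: coefM_eq => i hi; rewrite coef_poly ifT; last lia.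
by apply: mul_T; lia.
Qed.

Lemma fps_ext (P : {poly K}) s t n : (forall m, s m = t m) ->
  fps_mulpoly P s n = fps_mulpoly P t n.
Proof. by move=> h; apply: eq_bigr => i _; rewrite h. Qed.

Lemma fps_sub (P : {poly K}) s t n :
  fps_mulpoly P (fun m => s m - t m) n = fps_mulpoly P s n - fps_mulpoly P t n.
Proof. by rewrite /fps_mulpoly -sumrB; apply: eq_bigr => i _; rewrite mulrBr. Qed.

Lemma fps_subst_mul (P : {poly K}) s q n : (0 < q)%N ->
  fps_subst_pow (fps_mulpoly P s) q n =
  fps_mulpoly (P \Po 'X^q) (fps_subst_pow s q) n.
Proof.
move=> q0; rewrite (mul_T _ _ (ltnSn n)).
have -> : fps_subst_pow (fps_mulpoly P s) q n =
   ((P * truncT n.+1 s) \Po 'X^q)`_n.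
  rewrite coef_comp_poly_Xn // /fps_subst_pow; case: ifP => // hd.
  by apply: mul_T; rewrite ltnS leq_div.
rewrite (comp_polyM P); apply: coefM_eq => i hi.
rewrite coef_comp_poly_Xn // /truncT !coef_poly /fps_subst_pow (ltnS i n) hi.
case: ifP => // hd; rewrite ifT // ltnS; exact: leq_trans (leq_div i q) hi.
Qed.

Lemma fps_lucas (S : {poly K}) s t (p : nat) : (0 < p)%N -> (size S <= p)%N ->
  (forall m r, (r < p)%N -> s (p * m + r)%N = S`_r * t m) ->
  forall n, fps_mulpoly S (fps_subst_pow t p) n = s n.
Proof.
move=> p0 hS hs n.
have hr : (n %% p < n.+1)%N by have := leq_mod n p; lia.
rewrite /fps_mulpoly (bigD1 (Ordinal hr)) //= big1 ?addr0.
  rewrite /fps_subst_pow -(eqn_mod_dvd _ (leq_mod n p)) modn_mod eqxx.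
  have -> : (n - n %% p)%N = (p * (n %/ p))%N.
    by rewrite {1}(divn_eq n p) addnK mulnC.
  rewrite mulKn // {3}(divn_eq n p) mulnC hs // ltn_mod //.
move=> i hi; rewrite /fps_subst_pow.
case: (ltnP i p) => hip; last by rewrite nth_default ?mul0r //; exact: leq_trans hS hip.
have hin : (i <= n)%N by have := ltn_ord i; lia.
rewrite -(eqn_mod_dvd _ hin) (modn_small hip).
case: eqP => [e|]; last by rewrite mulr0.
by move: hi; rewrite -val_eqE /= -e eqxx.
Qed.

End Fps.

Section Cancel.
Variable K : fieldType.
Lemma fps_cancel (G : {poly K}) h : G`_0 != 0 ->
  (forall n, fps_mulpoly G h n = 0) -> forall n, h n = 0.
Proof.
move=> g0 hG n; elim: n {-2}n (leqnn n) => [|N IH] n hn.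
  have := hG n; rewrite /fps_mulpoly.
  have -> : n = 0%N by lia.
  by rewrite big_ord1 subn0 => /eqP; rewrite mulf_eq0 (negbTE g0) => /eqP.
have := hG n; rewrite /fps_mulpoly big_ord_recl subn0 big1 ?addr0.
  by move/eqP; rewrite mulf_eq0 (negbTE g0) => /eqP.
move=> i _; rewrite IH ?mulr0 //=; rewrite /bump /=; lia.
Qed.
End Cancel.
Section Lucas.
Variable p : nat.
Hypothesis pp : prime p.
Local Notation F := ('F_p).

Lemma p0F : (p%:R : F) = 0. Proof. exact: pchar_Fp_0. Qed.

Lemma binp0 d : (0 < d < p)%N -> ('C(p, d)%:R : F) = 0.
Proof.
move=> hd; have := prime_dvd_bin pp hd; case/dvdnP => q ->.
by rewrite natrM p0F mulr0.
Qed.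

Lemma lucas n : forall a b c d, (b < p)%N -> (d < p)%N -> n = (p * a + b)%N ->
  ('C(n, p * c + d)%:R : F) = 'C(a, c)%:R * 'C(b, d)%:R.
Proof.
have p1 := prime_gt1 pp.
elim: n => [|n IH] a b c d hb hd hn.
  have a0 : a = 0%N by lia.
  have b0 : b = 0%N by lia.
  subst; rewrite !bin0n.
  have -> : (p * c + d == 0)%N = (c == 0%N) && (d == 0%N) by lia.
  by case: (c == 0%N); case: (d == 0%N); rewrite /= ?mul1r ?mul0r.
case Ek: (p * c + d)%N => [|k].
  have c0 : c = 0%N by lia.
  have d0 : d = 0%N by lia.
  by subst; rewrite !bin0 mul1r.
rewrite binS natrD.
have [a' [b' [hb' [hn' hcase]]]] : exists a' b', [/\ (b' < p)%N, n = (p * a' + b')%N &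
   ((b = b'.+1 /\ a = a') \/ (b = 0 /\ a = a'.+1 /\ b' = p.-1))%N].
  case: b hb hn => [|b] hb hn.
    case: a hn => [|a] hn; first lia.
    exists a, p.-1; split; [lia|lia|right; lia].
  exists a, b; split; [lia|lia|left; lia].
have [c' [d' [hd' [hk' hkase]]]] : exists c' d', [/\ (d' < p)%N, k = (p * c' + d')%N &
   ((d = d'.+1 /\ c = c') \/ (d = 0 /\ c = c'.+1 /\ d' = p.-1))%N].
  case: d hd Ek => [|d] hd Ek.
    case: c Ek => [|c] Ek; first lia.
    exists c, p.-1; split; [lia|lia|right; lia].
  exists c, d; split; [lia|lia|left; lia].
rewrite -Ek (IH a' b' c d) // hk' (IH a' b' c' d') //.
case: hcase => [[eb ea]|[eb [ea eb']]]; case: hkase => [[ed ec]|[ed [ec ed']]]; subst.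
- by rewrite binS natrD mulrDr.
- rewrite (@bin_small b' p.-1); last lia.
  by rewrite mulr0 addr0 !bin0.
- rewrite -mulrDr -natrD -binS prednK; last lia.
  by rewrite binp0 ?mulr0 ?bin0n ?mulr0 //; lia.
- by rewrite !bin0 binn !mulr1 -natrD -binS.
Qed.

Definition u (n : nat) : F := 'C(2 * n, n)%:R.

Lemma u_small r : (r < p)%N -> (p <= 2 * r)%N -> u r = 0.
Proof.
move=> hr hp; have h := @lucas (2 * r) 1 (2 * r - p) 0 r.
rewrite muln0 add0n in h; rewrite /u h ?(@bin_small (2 * r - p) r) ?mulr0 //; lia.
Qed.

Lemma u_lucas m r : (r < p)%N -> u (p * m + r) = u r * u m.
Proof.
move=> hr; case: (ltnP (2 * r) p) => h2.
  rewrite /u (@lucas _ (2 * m) (2 * r) m r); [exact: mulrC|lia..].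
rewrite (u_small hr h2) mul0r /u (@lucas _ (2 * m).+1 (2 * r - p) m r) ?(@bin_small (2 * r - p) r) ?mulr0 //; lia.
Qed.

End Lucas.
Definition E (n : nat) : int :=
  if n is k.+1 then (2 * 'C(2 * k, k))%N%:Z - (2 * 'C(2 * k, k.+1))%N%:Z else -1.

Lemma binE_nat k : ('C(2 * k.+1, k.+1) + (2 * k).+1 * (2 * 'C(2 * k, k.+1)) =
   (2 * k).+1 * (2 * 'C(2 * k, k)))%N.
Proof.
have h1 := mul_bin_left (2 * k) k.
have h2 := mul_bin_diag (2 * k.+1) k.
have h3 := mul_bin_diag (2 * k).+1 k.
have h4 : 'C((2 * k).+1, k.+1) = 'C((2 * k).+1, k).
  by rewrite -bin_sub; [congr 'C(_, _); lia | lia].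
have e1 : (2 * k.+1).-1 = (2 * k).+1 by lia.
have e2 : (2 * k).+1.-1 = (2 * k) by lia.
rewrite e1 in h2; rewrite e2 in h3.
have e3 : (2 * k - k = k)%N by lia.
rewrite e3 in h1.
rewrite h4 in h3.
have hZ : 'C(2 * k.+1, k.+1) = (2 * 'C((2 * k).+1, k))%N.
  apply/eqP; rewrite -(eqn_pmul2l (ltn0Sn k)); apply/eqP.
  rewrite -h2; lia.
rewrite hZ.
apply/eqP; rewrite -(eqn_pmul2l (ltn0Sn k)); apply/eqP.
set X := 'C(2 * k, k) in h1 h3 *.
set Y := 'C(2 * k, k.+1) in h1 *.
set V := 'C((2 * k).+1, k) in h3 *.
have h5 : ((2 * k).+1 * (k.+1 * Y) = (2 * k).+1 * (k * X))%N by rewrite h1.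
nia.
Qed.

Lemma binE n : ('C(2 * n, n))%:Z = ((2 * n)%:Z - 1) * E n.
Proof.
case: n => [|k] /=; first by [].
have := binE_nat k; lia.
Qed.

Lemma f2E n : frak_f2 n = ((- ('C(2 * n, n)%:Z * E n)) : int)%:~R.
Proof.
rewrite /frak_f2.
have hw : (((2 * n)%:Z - 1)%:~R : rat) != 0.
  by rewrite intr_eq0; apply/negP => /eqP; lia.
rewrite rmorphN rmorphM /= intrM.
have hc : ('C(2 * n, n)%:R : rat) = (((2 * n)%:Z - 1) * E n)%:~R by rewrite -binE.
have hc' : (('C(2 * n, n))%:Z%:~R : rat) = (((2 * n)%:Z - 1) * E n)%:~R by rewrite binE.
rewrite hc intrM hc' intrM.
move: hw; set w := (_ - 1)%:~R; set e := (E n)%:~R => hw.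
by congr (- _); rewrite mulrC mulrA mulKf // mulrCA mulrA.
Qed.

Lemma red_int (p : nat) (z : int) : red_rat p (z%:~R) = z%:~R.
Proof. by rewrite /red_rat numq_int denq_int divr1. Qed.

Lemma pint_int (p : nat) (z : int) : prime p -> p_integral p (z%:~R).
Proof. by move=> pp; rewrite /p_integral denq_int dvdn1; apply/eqP => h; rewrite h in pp. Qed.

Section Main.
Variable p : nat.
Hypothesis pp : prime p.
Local Notation F := ('F_p).

Definition ap (n : nat) : F := fps_red p frak_f2 n.
Definition v (n : nat) : F := (E n)%:~R.
Definition w (n : nat) : F := (2 * n)%:R - 1.
Definition cc (n : nat) : F := (@u p n) ^+ 2.

Lemma apE n : ap n = - (@u p n * v n).
Proof. by rewrite /ap /fps_red f2E red_int intrN intrM. Qed.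

Lemma uwv n : @u p n = w n * v n.
Proof.
have := congr1 (fun z : int => (z%:~R : F)) (binE n).
by rewrite /= intrM intrB.
Qed.

Lemma w_lucas m r : w (p * m + r) = w r.
Proof.
rewrite /w; have -> : (2 * (p * m + r) = p * (2 * m) + 2 * r)%N by lia.
by rewrite natrD natrM p0F // mul0r add0r.
Qed.

Lemma ap_lucas m r : (r < p)%N -> ap (p * m + r) = ap r * cc m.
Proof.
move=> hr; rewrite !apE /cc.
case: (ltnP (2 * r) p) => h2; last first.
  by rewrite u_lucas // (u_small pp hr h2) !mul0r oppr0 mul0r.
have hw : w r != 0.
  case: r hr h2 => [|r] hr h2.
    by rewrite /w muln0 sub0r oppr_eq0 oner_eq0.
  rewrite /w (_ : (2 * r.+1)%N = (2 * r + 1).+1); last lia.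
  rewrite -natr1 addrK -(dvdn_pcharf (pchar_Fp pp)).
  apply/negP => hd; have h0 : (0 < 2 * r + 1)%N by lia.
  have := dvdn_leq h0 hd; lia.
have e1 : v (p * m + r) = @u p (p * m + r) / w r.
  by rewrite uwv w_lucas mulrC mulKf.
have e2 : v r = @u p r / w r by rewrite uwv mulrC mulKf.
rewrite e1 e2 u_lucas //.
by rewrite mulNr; congr (- _); ring.
Qed.

Lemma cc_lucas m r : (r < p)%N -> cc (p * m + r) = cc r * cc m.
Proof. by move=> hr; rewrite /cc u_lucas // exprMn. Qed.

End Main.

Lemma subst_ext (K : comNzRingType) (s t : nat -> K) q n :
  (forall m, s m = t m) -> fps_subst_pow s q n = fps_subst_pow t q n.
Proof. by move=> h; rewrite /fps_subst_pow h. Qed.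

Lemma f2_0 : frak_f2 0 = 1.
Proof. by rewrite f2E. Qed.

Theorem mainTheorem18 : in_L2 (fun p => p != 2%N) frak_f2.
Proof.
split; first exact: f2_0.
exists 1; split; first exact: ltr01.
move=> p pp _; split.
  by move=> n; rewrite f2E pint_int.
exists 1%N; split => //.
have p0 : (0 < p)%N by exact: prime_gt0.
set f := fps_red p frak_f2.
have fE : forall n, f n = ap p n by [].
set A : {poly 'F_p} := \poly_(i < p) ap p i.
set B : {poly 'F_p} := \poly_(i < p) cc p i.
set g1 := fps_subst_pow (cc p) p.
set g2 := fps_subst_pow g1 p.
set Q := A \Po 'X^p.
set B' := B \Po 'X^p.
set P := A * B'.
have F1 : forall n, fps_mulpoly A g1 n = f n.
  apply: fps_lucas => //; first exact: size_poly.
  by move=> m r hr; rewrite fE coef_poly hr ap_lucas.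
have F2 : forall n, fps_mulpoly B g1 n = cc p n.
  apply: fps_lucas => //; first exact: size_poly.
  by move=> m r hr; rewrite coef_poly hr cc_lucas.
have F3 : forall n, g1 n = fps_mulpoly B' g2 n.
  move=> n; rewrite -fps_subst_mul //; apply: subst_ext => m; by rewrite F2.
have F4 : forall n, fps_subst_pow f p n = fps_mulpoly Q g2 n.
  move=> n; rewrite -fps_subst_mul //; apply: subst_ext => m; by rewrite F1.
have Hid : forall n, fps_mulpoly Q f n = fps_mulpoly P (fps_subst_pow f p) n.
  move=> n.
  rewrite (@fps_ext _ _ _ _ _ (fun m => esym (F1 m))) fps_assoc (@fps_ext _ _ _ _ _ F3) fps_assoc.
  rewrite (@fps_ext _ _ _ _ _ F4) fps_assoc; congr fps_mulpoly.
  by rewrite /P -mulrA mulrC.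
have Q0 : Q.[0] = 1.
  rewrite /Q horner_comp hornerXn expr0n gtn_eqF // horner_coef0 coef_poly p0.
  by rewrite apE /u /v /= bin0 mul1r opprK.
have Qn0 : Q != 0 by apply/eqP => h; move: Q0; rewrite h horner0 => /eqP; rewrite eq_sym oner_eq0.
set G := gcdp P Q.
have hQ : Q %/ G * G = Q by apply: divpK; exact: dvdp_gcdr.
have hP : P %/ G * G = P by apply: divpK; exact: dvdp_gcdl.
have hQG : (Q %/ G).[0] * G.[0] != 0 by rewrite -hornerM hQ Q0 oner_eq0.
have hsA : (size A <= p)%N by exact: size_poly.
have hsB : (size B <= p)%N by exact: size_poly.
have hsB' : (size B' <= ((size B).-1 * p).+1)%N.
  by have := size_comp_poly_leq B 'X^p; rewrite size_polyXn.
have hsQ : (size Q <= ((size A).-1 * p).+1)%N.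
  by have := size_comp_poly_leq A 'X^p; rewrite size_polyXn.
have hsP : (size P <= (size A + size B').-1)%N by exact: size_mul_leq.
exists (P %/ G), (Q %/ G); split.
- by apply: coprimep_div_gcd; rewrite Qn0 orbT.
- by move: hQG; rewrite mulf_eq0 negb_or => /andP [].
- rewrite mul1r ler_nat /rat_height.
  have h1 := leq_divp P G.
  have h2 := leq_divp Q G.
  have hp2 : ((size B).-1 * p <= (p - 1) * p)%N by apply: leq_mul => //; lia.
  have hp3 : ((size A).-1 * p <= (p - 1) * p)%N by apply: leq_mul => //; lia.
  have hp4 : ((p - 1) * p + p = p ^ (2 * 1))%N.
    rewrite muln1 -mulSnr; have -> : (p - 1).+1 = p by lia.
    by rewrite mulnn.
  move: hsB' hsQ hp2 hp3 hp4 h1 h2 hsP hsA.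
  generalize ((size B).-1 * p)%N ((size A).-1 * p)%N ((p - 1) * p)%N (p ^ (2 * 1))%N.
  move=> a b c d hB1 hQ1 ha hb hc hP1 hQ2 hP2 hA1.
  move: (size (P %/ G)) (size (Q %/ G)) (size P) (size Q) (size A) (size B') hB1 hQ1 hP1 hQ2 hP2 hA1 => x1 x2 x3 x4 x5 x6 *.
  rewrite geq_max; apply/andP; split; lia.
- rewrite expn1 => n.
  set h := fun m => fps_mulpoly (Q %/ G) f m - fps_mulpoly (P %/ G) (fps_subst_pow f p) m.
  suff : h n = 0 by move/eqP; rewrite subr_eq0 => /eqP.
  apply: (@fps_cancel _ G).
    by rewrite -horner_coef0; move: hQG; rewrite mulf_eq0 negb_or => /andP [].
  move=> m; rewrite fps_sub !fps_assoc.
  by rewrite (mulrC G) hQ (mulrC G) hP Hid subrr.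
Qed.
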